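(* For every choice of post-change pmfs $f_1$, nonempty affected set $\mathcal{J}$, change point $t_1$ and every realization of the pre-change samples $X_1^{t_1-1}$, the NIPT stopping time satisfies \[ E_{f_1,\mathcal{J},t_1}\big((t_I-t_1+1)^+\,\big|\,X_1^{t_1-1}\big)\leq E_{f_1,\mathcal{J},1}\left(t_S+t_I\right). \]
   Context: Sensor network model: there are $J$ sensors. Sensor $j\in[J]=\{1,\dots,J\}$ has a finite alphabet $\mathcal{A}_j$ with $m_j$ letters; $\mathcal{P}_j$ is the simplex of pmfs on $\mathcal{A}_j$ with the $\ell_1$ norm. Sensor $j$ observes $X_{j,k}$, $k=1,2,\dots$; write $X_k=(X_{1,k},\dots,X_{J,k})$ and $X_l^k=(X_l,\dots,X_k)$. There is a known pre-change pmf $f_{j,0}\in\mathcal{P}_j$, an unknown change point $t_1\in\{1,2,\dots\}\cup\{\infty\}$, an unknown nonempty set $\mathcal{J}\subseteq[J]$ of affected sensors and unknown post-change pmfs $f_{j,1}$. For $k<t_1$ the vectors $X_k$ are i.i.d. with joint pmf $f_0=\otimes_j f_{j,0}$; for $k\ge t_1$ they are i.i.d. (independent of the past) with joint pmf $\otimes_j\tilde f_j$ where $\tilde f_j=f_{j,1}$ if $j\in\mathcal{J}$ and $\tilde f_j=f_{j,0}$ otherwise. $P_{f_1,\mathcal{J},t_1}$, $E_{f_1,\mathcal{J},t_1}$ denote the corresponding law and expectation. For each $j$ there is a concave statistic $q_j:\mathcal{P}_j\to\mathbb{R}$, Lipschitz with constant $L_j$ w.r.t. $\ell_1$, with $q_j(f_{j,0})=0$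 and $q_j(f_{j,1})\ge\underline{q}_j>0$. Let $\mathcal{A}=\times_j\mathcal{A}_j$, $\mathcal{P}$ the simplex of pmfs on $\mathcal{A}$, and $q(f)=\sum_j q_j(f_j)$ where $f_j$ is the $j$-th marginal of $f\in\mathcal{P}$. $\hat f_{X_l^k}\in\mathcal{P}$ is the empirical pmf of $X_l,\dots,X_k$. $I(f\|g)=\sum_a f(a)\log\frac{f(a)}{g(a)}$ is the KL divergence. $x^+=\max(x,0)$. Network information projection test (NIPT): fix $0<\kappa<\min_j\underline{q}_j$, a threshold $c^S>0$ and thresholds $c_n^D\ge 0$, $n\ge1$. For $n\ge1$ let $f_n^*=\arg\min\{I(f\|f_0): f\in\mathcal{P},\,q(f)\ge c^S/n+\kappa\}$. Set $\tau_1=1$ and for $k\ge1$: $S_k=\max_{\tau_k\le l\le k+1}(k-l+1)\big(q(\hat f_{X_l^k})-\kappa\big)$ (the term $l=k+1$ equals $0$), $i_k$ the maximizing $l$, $n_k=k-i_k+1$, $D_k=I(\hat f_{X_{i_k}^k}\|f^*_{n_k})$, and $\tau_{k+1}=k+1$ if $S_k\ge c^S$ and $D_k<c^D_{n_k}$, else $\tau_{k+1}=\tau_k$. Define $t_S=\inf\{k: S_k\ge c^S\}$ and $t_I=\inf\{k: S_k\ge c^S\text{ and }D_k\ge c^D_{n_k}\}$. *)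

(* Defs.v *)
From HB Require Import structures.
From mathcomp Require Import all_boot all_order all_algebra.
From mathcomp Require Import all_classical all_reals all_analysis.
Set Implicit Arguments.
Unset Strict Implicit.
Unset Printing Implicit Defensive.
Import Order.TTheory GRing.Theory Num.Theory.
Local Open Scope ring_scope.
Local Open Scope classical_set_scope.

Definition jointA (J : nat) (A : 'I_J -> finType) : finType :=
  {dffun forall j : 'I_J, A j}.

Section NIPT.
Variable R : realType.

Definition is_pmf (T : finType) (f : T -> R) : Prop :=
  (forall a, 0 <= f a) /\ \sum_(a : T) f a = 1.

Definition concave_on_simplex (T : finType) (qq : (T -> R) -> R) : Prop :=
  forall (f g : T -> R) (t : R), is_pmf f -> is_pmf g -> 0 <= t <= 1 ->
    t * qq f + (1 - t) * qq g <= qq (fun a => t * f a + (1 - t) * g a).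

Definition lipschitz_l1 (T : finType) (L : R) (qq : (T -> R) -> R) : Prop :=
  forall f g : T -> R, is_pmf f -> is_pmf g ->
    `|qq f - qq g| <= L * \sum_(a : T) `|f a - g a|.

(* KL divergence I(f||g) = sum_a f(a) log(f(a)/g(a)), with the usual
   conventions 0 log(0/g) = 0 and p log(p/0) = +oo for p > 0 *)
Definition KL (T : finType) (f g : T -> R) : \bar R :=
  (\sum_(a : T) (if f a == 0%R then 0%E
                 else if g a == 0%R then +oo%E
                 else (f a * ln (f a / g a))%:E))%E.

Variables (J : nat) (A : 'I_J -> finType).

Definition marginal (f : jointA A -> R) (j : 'I_J) : A j -> R :=
  fun b => \sum_(a : jointA A | a j == b) f a.
Arguments marginal f j : clear implicits.

Definition qtot (q : forall j : 'I_J, (A j -> R) -> R) (f : jointA A -> R) : R :=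
  \sum_(j < J) q j (marginal f j).

Definition prod_pmf (g : forall j : 'I_J, A j -> R) : jointA A -> R :=
  fun a => \prod_(j < J) g j (a j).

Definition empirical (x : nat -> jointA A) (l k : nat) : jointA A -> R :=
  fun a => (\sum_(l <= i < k.+1) ((x i == a)%:R : R)) / (k.+1 - l)%:R.

(* law of X_k under P_{f1,Jset,t1} *)
Definition change_law (f0 f1 : forall j : 'I_J, A j -> R) (Jset : {set 'I_J})
    (t1 k : nat) : jointA A -> R :=
  if (k < t1)%N then prod_pmf f0
  else prod_pmf (fun j => if j \in Jset then f1 j else f0 j).

Definition is_fstar (q : forall j : 'I_J, (A j -> R) -> R) (f0 : forall j : 'I_J, A j -> R)
    (kappa cS : R) (fstar : nat -> jointA A -> R) : Prop :=
  forall n : nat, (0 < n)%N ->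
    (exists f : jointA A -> R, is_pmf f /\ cS / n%:R + kappa <= qtot q f) ->
    [/\ is_pmf (fstar n), cS / n%:R + kappa <= qtot q (fstar n) &
        forall f : jointA A -> R, is_pmf f -> cS / n%:R + kappa <= qtot q f ->
          (KL (fstar n) (prod_pmf f0) <= KL f (prod_pmf f0))%E].

(* The NIPT, run on a deterministic sample path x (x k = X_k, k >= 1). *)
Section Test.
Variables (q : forall j : 'I_J, (A j -> R) -> R) (f0 : forall j : 'I_J, A j -> R)
  (kappa cS : R) (cD : nat -> R) (fstar : nat -> jointA A -> R)
  (x : nat -> jointA A).

(* (k - l + 1) (q(hat f_{x_l^k}) - kappa); equals 0 for l = k+1 *)
Definition wval (l k : nat) : R :=
  (k.+1 - l)%:R * (qtot q (empirical x l k) - kappa).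

(* S_k, given tau_k = t *)
Definition Sstat (t k : nat) : R := \big[Num.max/0]_(t <= l < k.+2) wval l k.

Definition istat (t k : nat) : nat :=
  head k.+1 [seq l <- index_iota t k.+2 | wval l k == Sstat t k].

Definition nstat (t k : nat) : nat := k.+1 - istat t k.

Definition Dstat (t k : nat) : \bar R :=
  KL (empirical x (istat t k) k) (fstar (nstat t k)).

(* tau_k, k >= 1 (tau_0 is an unused dummy) *)
Fixpoint tau (k : nat) : nat :=
  match k with
  | 0 => 1
  | k'.+1 =>
      if k' is 0 then 1
      else let t := tau k' in
           if (cS <= Sstat t k') && (Dstat t k' < (cD (nstat t k'))%:E)%E
           then k'.+1 else t
  end.

Definition S_ (k : nat) : R := Sstat (tau k) k.
Definition n_ (k : nat) : nat := nstat (tau k) k.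
Definition D_ (k : nat) : \bar R := Dstat (tau k) k.

(* t_S and t_I, as extended reals (inf of the empty set = +oo) *)
Definition t_S : \bar R :=
  ereal_inf [set (k%:R)%:E | k in [set k : nat | (0 < k)%N /\ cS <= S_ k]].
Definition t_I : \bar R :=
  ereal_inf [set (k%:R)%:E | k in
    [set k : nat | [/\ (0 < k)%N, cS <= S_ k & ((cD (n_ k))%:E <= D_ k)%E]]].
End Test.

(* the process X (indexed by k >= 1) has the law with k-th marginal pmf law k,
   the X_k being independent *)
Definition has_law (d : measure_display) (T : measurableType d) (P : probability T R)
    (X : nat -> T -> jointA A) (law : nat -> jointA A -> R) : Prop :=
  (forall k a, measurable [set w | X k w = a]) /\
  forall (n : nat) (a : nat -> jointA A),
    P [set w | forall i, (0 < i <= n)%N -> X i w = a i] =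
    (\prod_(1 <= i < n.+1) law i (a i))%:E.

Definition prefix_event (T : Type) (X : nat -> T -> jointA A) (t1 : nat)
    (xpre : nat -> jointA A) : set T :=
  [set w | forall i, (0 < i < t1)%N -> X i w = xpre i].

Definition sample_path (T : Type) (X : nat -> T -> jointA A) (w : T) : nat -> jointA A :=
  fun k => X k w.

End NIPT.

(* Main.v *)
Require Import Defs.
From HB Require Import structures.
From mathcomp Require Import all_boot all_order all_algebra.
From mathcomp Require Import all_classical all_reals all_analysis.
From mathcomp Require Import zify ring lra.
From mathcomp Require Import measurable_realfun lebesgue_measure lebesgue_integral.
Import Order.TTheory GRing.Theory Num.Theory.
Import numFieldNormedType.Exports.
Local Open Scope ring_scope.
Local Open Scope classical_set_scope.
Set Implicit Arguments.
Unset Strict Implicit.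
Unset Printing Implicit Defensive.
Section Path.
Variables (R : realType) (J : nat) (A : 'I_J -> finType)
  (q : forall j : 'I_J, (A j -> R) -> R) (kappa cS : R) (cD : nat -> R)
  (fstar : nat -> jointA A -> R).
Local Notation path := (nat -> jointA A).

Definition shift (m : nat) (x : path) : path := fun i => x (i + m)%N.

Lemma empirical_shift x m l k :
  empirical R (shift m x) l k = empirical R x (l + m) (k + m).
Proof.
apply/funext => a; rewrite /empirical.
have -> : ((k + m).+1 - (l + m) = k.+1 - l)%N by lia.
by rewrite big_addn; have -> : ((k + m).+1 - m = k.+1)%N by lia.
Qed.

Lemma wval_shift x m l k : wval q kappa (shift m x) l k = wval q kappa x (l + m) (k + m).
Proof.
rewrite /wval empirical_shift.
by have -> : ((k + m).+1 - (l + m) = k.+1 - l)%N by lia.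
Qed.

Lemma Sstat_shift x m t k : Sstat q kappa (shift m x) t k = Sstat q kappa x (t + m) (k + m).
Proof.
rewrite /Sstat big_addn; have -> : ((k + m).+2 - m = k.+2)%N by lia.
by apply: eq_bigr => l _; rewrite wval_shift.
Qed.

Lemma head_map_nat (f : nat -> nat) d s : head (f d) [seq f i | i <- s] = f (head d s).
Proof. by case: s. Qed.

Lemma istat_shift x m t k : istat q kappa x (t + m) (k + m) = (istat q kappa (shift m x) t k + m)%N.
Proof.
rewrite /istat /index_iota.
have -> : ((k + m).+2 - (t + m) = k.+2 - t)%N by lia.
rewrite (addnC t m) iotaDl filter_map.
have -> : (k + m).+1 = (m + k.+1)%N by lia.
rewrite head_map_nat addnC; congr (head _ _ + _)%N.
apply: eq_filter => l /=.
by rewrite wval_shift Sstat_shift (addnC m l) (addnC m t).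
Qed.

Lemma Dstat_shift x m t k : Dstat q kappa fstar (shift m x) t k = Dstat q kappa fstar x (t + m) (k + m).
Proof.
rewrite /Dstat /nstat istat_shift empirical_shift.
by have -> : ((k + m).+1 - (istat q kappa (shift m x) t k + m) = k.+1 - istat q kappa (shift m x) t k)%N by lia.
Qed.

Lemma nstat_shift x m t k : nstat q kappa (shift m x) t k = nstat q kappa x (t + m) (k + m).
Proof. rewrite /nstat istat_shift; lia. Qed.

Local Notation tau := (tau q kappa cS cD fstar).

Lemma tau_S x k : (0 < k)%N -> tau x k.+1 =
  if (cS <= Sstat q kappa x (tau x k) k) &&
     (Dstat q kappa fstar x (tau x k) k < (cD (nstat q kappa x (tau x k) k))%:E)%E
  then k.+1 else tau x k.
Proof. by case: k. Qed.

Lemma tau_ge1 x k : (0 < tau x k)%N.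
Proof.
elim: k => [//|[//|k] IH]; rewrite tau_S //; by case: ifP.
Qed.

Lemma tau_le x k : (tau x k <= maxn k 1)%N.
Proof.
elim: k => [//|[//|k] IH]; rewrite tau_S //; case: ifP => _; lia.
Qed.

Lemma tau_shift x m : tau x m.+1 = m.+1 ->
  forall j, (0 < j)%N -> tau x (j + m) = (tau (shift m x) j + m)%N.
Proof.
move=> hm; elim=> [//|[|j] IH _]; first by rewrite add1n hm.
rewrite addSn tau_S; last lia.
rewrite (tau_S _ (isT : (0 < j.+1)%N)) IH //.
rewrite -Sstat_shift -Dstat_shift -nstat_shift.
by case: ifP => _ //; rewrite addSn.
Qed.

Lemma S_shift x m : tau x m.+1 = m.+1 ->
  forall j, (0 < j)%N -> S_ q kappa cS cD fstar x (j + m) = S_ q kappa cS cD fstar (shift m x) j.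
Proof. by move=> hm j j0; rewrite /S_ tau_shift // Sstat_shift. Qed.

Lemma D_shift x m : tau x m.+1 = m.+1 ->
  forall j, (0 < j)%N -> D_ q kappa cS cD fstar x (j + m) = D_ q kappa cS cD fstar (shift m x) j.
Proof. by move=> hm j j0; rewrite /D_ tau_shift // Dstat_shift. Qed.

Lemma n_shift x m : tau x m.+1 = m.+1 ->
  forall j, (0 < j)%N -> n_ q kappa cS cD fstar x (j + m) = n_ q kappa cS cD fstar (shift m x) j.
Proof. by move=> hm j j0; rewrite /n_ tau_shift // nstat_shift. Qed.

Lemma empirical_loc (x y : path) l k : (forall i, (l <= i <= k)%N -> x i = y i) ->
  empirical R x l k = empirical R y l k.
Proof.
move=> h; apply/funext => a; rewrite /empirical.
have -> : \sum_(l <= i < k.+1) ((x i == a)%:R : R) = \sum_(l <= i < k.+1) ((y i == a)%:R : R).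
  by apply: eq_big_nat => i /andP[li ik]; rewrite (h i) //; apply/andP; split.
by [].
Qed.

Lemma Sstat_loc x y t k : (forall i, (t <= i <= k)%N -> x i = y i) ->
  Sstat q kappa x t k = Sstat q kappa y t k /\ istat q kappa x t k = istat q kappa y t k
  /\ Dstat q kappa fstar x t k = Dstat q kappa fstar y t k
  /\ nstat q kappa x t k = nstat q kappa y t k.
Proof.
move=> h.
have hw : forall l, (t <= l)%N -> wval q kappa x l k = wval q kappa y l k.
  move=> l tl; rewrite /wval (@empirical_loc x y) // => i /andP[li ik].
  by apply: h; rewrite ik (leq_trans tl li).
have hS : Sstat q kappa x t k = Sstat q kappa y t k.
  by apply: eq_big_nat => l /andP[tl _]; rewrite hw.
have hi : istat q kappa x t k = istat q kappa y t k.
  rewrite /istat hS; congr head; apply: eq_in_filter => l.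
  by rewrite mem_index_iota => /andP[tl _]; rewrite hw.
split=> //; split=> //; split; last by rewrite /nstat hi.
rewrite /Dstat /nstat hi (@empirical_loc x y) // => i /andP[li ik].
suff : (t <= istat q kappa y t k)%N by move=> ?; apply: h; lia.
move: li; rewrite /istat.
case E : [seq l <- index_iota t k.+2 | wval q kappa y l k == Sstat q kappa y t k] => [|l s] /=.
  lia.
move=> _.
have : l \in [seq l <- index_iota t k.+2 | wval q kappa y l k == Sstat q kappa y t k].
  by rewrite E mem_head.
by rewrite mem_filter mem_index_iota => /andP[_ /andP[]].
Qed.

Definition agree (x y : path) (n : nat) := forall i, (0 < i <= n)%N -> x i = y i.

Lemma tau_loc x y k : agree x y k -> tau x k.+1 = tau y k.+1 /\ tau x k = tau y k.
Proof.
elim: k => [//|k IH] h.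
have hk : agree x y k by move=> i /andP[i0 ik]; apply: h; rewrite i0 (leq_trans ik).
have [e1 _] := IH hk.
split=> //; rewrite (tau_S x) // (tau_S y) // e1.
have [-> [_ [-> ->]]] := @Sstat_loc x y (tau y k.+1) k.+1
  (fun i hi => h i (introT andP (conj (leq_trans (tau_ge1 _ _) (proj1 (andP hi))) (proj2 (andP hi))))).
by [].
Qed.

Lemma stat_loc x y k : agree x y k ->
  S_ q kappa cS cD fstar x k = S_ q kappa cS cD fstar y k /\
  D_ q kappa cS cD fstar x k = D_ q kappa cS cD fstar y k /\
  n_ q kappa cS cD fstar x k = n_ q kappa cS cD fstar y k.
Proof.
move=> h; have [_ e] := tau_loc h.
rewrite /S_ /D_ /n_ e.
have [-> [_ [-> ->]]] := @Sstat_loc x y (tau y k) k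
  (fun i hi => h i (introT andP (conj (leq_trans (tau_ge1 _ _) (proj1 (andP hi))) (proj2 (andP hi))))).
by [].
Qed.

End Path.
Section InfSeries.
Variable R : realType.
Local Open Scope ereal_scope.

Lemma inf_nat_le (P : nat -> Prop) k : P k -> ereal_inf [set ((n%:R : R)%:E) | n in P] <= (k%:R)%:E.
Proof. by move=> Pk; apply: ereal_inf_lbound; exists k. Qed.

Lemma inf_nat_cases (P : nat -> Prop) :
  (ereal_inf [set ((n%:R : R)%:E) | n in P] = +oo /\ forall k, ~ P k) \/
  exists k, [/\ P k, (forall i, P i -> (k <= i)%N) & ereal_inf [set ((n%:R : R)%:E) | n in P] = (k%:R)%:E].
Proof.
have [[k Pk]|nP] := pselect (exists k, P k); last first.
  left; split; last by move=> k Pk; apply: nP; exists k.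
  rewrite (_ : [set _ | n in P] = set0) ?ereal_inf0 //.
  by apply/seteqP; split => // z [n Pn _]; apply: nP; exists n.
right.
have exP : exists n, `[< P n >] by exists k; apply/asboolP.
have [m /asboolP Pm mmin] := ex_minnP exP.
exists m; split => //; first by move=> i /asboolP /mmin.
apply/eqP; rewrite eq_le inf_nat_le //=.
apply: le_ereal_inf_tmp; move=> z [n Pn <-].
by rewrite lee_fin ler_nat; apply: mmin; apply/asboolP.
Qed.

Lemma inf_nat_gt (P : nat -> Prop) n :
  ((n%:R : R)%:E < ereal_inf [set ((k%:R : R)%:E) | k in P]) <-> forall k, P k -> (n < k)%N.
Proof.
case: (inf_nat_cases P) => [[-> nP]|[k [Pk kmin ->]]].
  by split => [_ k /nP //|_]; rewrite ltry.
rewrite lte_fin ltr_nat; split => [nk i /kmin|]; first by apply: leq_trans.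
by apply.
Qed.

Definition ind (b : Prop) : \bar R := ((`[< b >] : bool)%:R : R)%:E.

Lemma ind_ge0 b : 0 <= ind b.
Proof. by rewrite /ind lee_fin; case: asboolP. Qed.

Lemma series_ones : \sum_(n <oo) ((1 : R)%:E) = +oo.
Proof.
set s := \sum_(n <oo) _.
have hN : forall N : nat, (N%:R : R)%:E <= s.
  move=> N; apply: le_trans (nneseries_lim_ge N _) => //.
  by rewrite sumEFin sumr_const_nat subn0 lee_fin.
move: (hN 0%N); case: s hN => [r| |] hN // _.
have := hN (Num.Def.trunc r).+1; rewrite lee_fin => /le_lt_trans/(_ (truncnS_gt r)).
by rewrite ltxx.
Qed.

Lemma series_nat (k : nat) : \sum_(n <oo) ind (n < k)%N = (k%:R : R)%:E.
Proof.
rewrite (@nneseries_split _ _ 0 k); last by move=> *; apply: ind_ge0.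
rewrite eseries0 ?adde0; last by move=> i /= ki _; rewrite /ind asboolF //; lia.
rewrite add0n big_nat_cond (eq_bigr (fun _ => (1 : R)%:E)).
  by rewrite -big_nat_cond sumEFin sumr_const_nat subn0.
by move=> i /andP[/andP[_ ik] _]; rewrite /ind asboolT.
Qed.

Lemma series_lt (z : \bar R) : (z = +oo \/ exists k : nat, z = (k%:R)%:E) ->
  \sum_(n <oo) ind ((n%:R : R)%:E < z) = z.
Proof.
case=> [->|[k ->]].
  by rewrite -[RHS]series_ones; apply: eq_eseriesr => n _; rewrite /ind asboolT ?ltry.
rewrite -[RHS]series_nat; apply: eq_eseriesr => n _.
by rewrite /ind lte_fin ltr_nat.
Qed.

Lemma inf_nat_val (P : nat -> Prop) :
  ereal_inf [set ((n%:R : R)%:E) | n in P] = +oo \/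
  exists k : nat, ereal_inf [set ((n%:R : R)%:E) | n in P] = (k%:R)%:E.
Proof. by case: (inf_nat_cases P) => [[-> _]|[k [_ _ ->]]]; [left|right; exists k]. Qed.

End InfSeries.
From mathcomp Require Import lra.
Section Path2.
Variables (R : realType) (J : nat) (A : 'I_J -> finType)
  (q : forall j : 'I_J, (A j -> R) -> R) (kappa cS : R) (cD : nat -> R)
  (fstar : nat -> jointA A -> R).
Local Notation path := (nat -> jointA A).
Local Notation SS := (S_ q kappa cS cD fstar).
Local Notation DD := (D_ q kappa cS cD fstar).
Local Notation NN := (n_ q kappa cS cD fstar).
Local Notation TT := (tau q kappa cS cD fstar).
Local Notation TS := (t_S q kappa cS cD fstar).
Local Notation TI := (t_I q kappa cS cD fstar).

Definition cross (x : path) k := (0 < k)%N /\ cS <= SS x k.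
Definition stopI (x : path) k := [/\ (0 < k)%N, cS <= SS x k & ((cD (NN x k))%:E <= DD x k)%E].
Definition Rk t1 (x : path) k := [/\ (t1 <= k)%N, cross x k,
  (forall i, (t1 <= i < k)%N -> ~ cross x i) & (DD x k < (cD (NN x k))%:E)%E].

Lemma TS_def x : TS x = ereal_inf [set (k%:R)%:E | k in cross x].
Proof. by []. Qed.
Lemma TI_def x : TI x = ereal_inf [set (k%:R)%:E | k in stopI x].
Proof. by []. Qed.

Lemma noncross_tau x t1 k : (0 < t1)%N -> (t1 <= k)%N ->
  (forall i, (t1 <= i < k)%N -> ~ cross x i) -> (TT x k <= t1)%N.
Proof.
move=> t10; elim: k => [|k IH] h1 h3; first lia.
have [->|ne] := eqVneq t1 k.+1.
  by have := tau_le q kappa cS cD fstar x k.+1; lia.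
have t1k : (t1 <= k)%N by lia.
rewrite tau_S; last lia.
case: ifP => [/andP[c _]|_].
  by exfalso; apply: (h3 k); [lia|split; [lia|exact: c]].
by apply: IH => // i hi; apply: h3; lia.
Qed.

Lemma y_tau1 y j : (forall i, (0 < i < j)%N -> ~ cross y i) -> TT y j = 1%N.
Proof.
elim: j => [//|[//|j] IH] h.
rewrite tau_S //; case: ifP => [/andP[c _]|_].
  by exfalso; apply: (h j.+1); [lia|split; [lia|exact: c]].
by apply: IH => i hi; apply: h; lia.
Qed.

Lemma le_bigmax_seq (s : seq nat) (F : nat -> R) l : l \in s -> F l <= \big[Num.max/0]_(i <- s) F i.
Proof.
elim: s => [//|a s IH]; rewrite inE big_cons => /orP[/eqP->|ls].
  by rewrite le_max lexx.
by rewrite le_max IH ?orbT.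
Qed.

Lemma bigmax_le_seq (s : seq nat) (F : nat -> R) c : 0 <= c -> (forall i, i \in s -> F i <= c) ->
  \big[Num.max/0]_(i <- s) F i <= c.
Proof.
move=> c0; elim: s => [|a s IH] h; first by rewrite big_nil.
rewrite big_cons ge_max h ?mem_head //=.
by apply: IH => i ins; apply: h; rewrite inE ins orbT.
Qed.

Lemma Sstat_mono x t t' k : (t <= t')%N ->
  Sstat q kappa x t' k <= Sstat q kappa x t k.
Proof.
move=> h1; apply: bigmax_le_seq.
  rewrite /Sstat; elim: (index_iota t k.+2) => [|a s IH]; first by rewrite big_nil.
  by rewrite big_cons le_max IH orbT.
move=> l; rewrite mem_index_iota => hl.
apply: (@le_bigmax_seq _ (fun l => wval q kappa x l k)).
rewrite mem_index_iota; lia.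
Qed.

Lemma maxe_bound (t : \bar R) (K b t1 : nat) : (t <= (K%:R)%:E)%E -> (K <= b + t1.-1)%N ->
  (0 < t1)%N -> (maxe (t - (t1%:R)%:E + 1) 0 <= (b%:R)%:E)%E.
Proof.
move=> tK Kb t10; rewrite ge_max lee_fin ler0n andbT.
apply: (@le_trans _ _ ((K%:R)%:E - (t1%:R)%:E + 1)%E).
  by apply: leeD => //; apply: leeD.
rewrite -EFinB -EFinD lee_fin.
have h : ((K.+1)%:R <= (b + t1)%:R :> R) by rewrite ler_nat; lia.
rewrite -addn1 !natrD in h; lra.
Qed.

Lemma pathwise x t1 : (0 < t1)%N ->
  (maxe (TI x - (t1%:R)%:E + 1) 0 <= TS (shift t1.-1 x))%E \/
  exists M, Rk t1 x M /\
   (maxe (TI x - (t1%:R)%:E + 1) 0 <= TS (shift t1.-1 x) + TI (shift M x))%E.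
Proof.
move=> t10; set m0 := t1.-1; set y := shift m0 x.
rewrite !TS_def.
case: (@inf_nat_cases R (cross y)) => [[-> _]|[k0 [cy k0min ->]]].
  by left; rewrite leey.
have k00 : (0 < k0)%N by case: cy.
have ncy : forall i, (0 < i < k0)%N -> ~ cross y i.
  by move=> i hi /k0min; lia.
have exc : exists i, (t1 <= i <= k0 + m0)%N /\ cross x i.
  have [[i [hi ci]]|nc] := pselect (exists i, (t1 <= i < k0 + m0)%N /\ cross x i).
    by exists i; split => //; lia.
  exists (k0 + m0)%N; split; first lia.
  have ht : (TT x (k0 + m0) <= t1)%N.
    apply: noncross_tau => //; first lia.
    by move=> i hi ci; apply: nc; exists i.
  split; first lia.
  have e1 : SS y k0 = Sstat q kappa x t1 (k0 + m0).
    rewrite /S_ y_tau1 // /y Sstat_shift; congr Sstat; lia.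
  rewrite /S_; apply: le_trans (Sstat_mono _ _ _); last exact: ht.
  by rewrite -e1; case: cy.
have exP : exists i, (t1 <= i)%N && `[< cross x i >].
  by case: exc => i [hi ci]; exists i; rewrite asboolT // andbT; lia.
have [M /andP[t1M /asboolP cM] Mmin] := ex_minnP exP.
have Mk : (M <= k0 + m0)%N.
  case: exc => i [hi ci]; apply: leq_trans (Mmin i _) _; last lia.
  by rewrite asboolT // andbT; lia.
have ncM : forall i, (t1 <= i < M)%N -> ~ cross x i.
  move=> i hi ci; have := Mmin i; rewrite asboolT //; lia.
have [Dlt|Dge] := ltP (DD x M) ((cD (NN x M))%:E).
  right; exists M; split; first by split.
  have tM : TT x M.+1 = M.+1.
    rewrite tau_S; last by case: cM.
    by case: cM => _ c; rewrite /S_ /D_ /n_ in c Dlt *; rewrite c Dlt.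
  rewrite (TI_def (shift M x)).
  case: (@inf_nat_cases R (stopI (shift M x))) => [[-> _]|[j [sj _ ->]]].
    by rewrite addey ?leey.
  have j0 : (0 < j)%N by case: sj.
  have sx : stopI x (j + M).
    case: sj => _ c d; split; first lia.
      by rewrite S_shift.
    by rewrite n_shift // D_shift.
  rewrite -EFinD -natrD; apply: (maxe_bound (K := (j + M)%N)) => //.
    exact: (@inf_nat_le R).
  lia.
left; apply: (maxe_bound (K := M)) => //.
apply: (@inf_nat_le R); split => //; first by case: cM.
by case: cM.
Qed.

End Path2.
Section Prob.
Variables (R : realType) (J : nat) (A : 'I_J -> finType).
Local Notation path := (nat -> jointA A).
Variable a0 : jointA A.

Definition ext (s : seq (jointA A)) : path := fun i => nth a0 s i.-1.
Definition dep (N : nat) (C : path -> Prop) := forall x y, agree x y N -> C x -> C y.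

Lemma bigU_mem (T : Type) (I : eqType) (s : seq I) (sel : pred I) (F : I -> set T) w :
  (\big[setU/set0]_(i <- s | sel i) F i) w <-> exists i, [/\ i \in s, sel i & F i w].
Proof.
elim: s => [|h t IH]; first by rewrite big_nil; split => // -[i []].
rewrite big_cons; case: ifPn => sh.
  split.
    case=> [Fh|/IH [i [it si Fi]]]; first by exists h; rewrite mem_head.
    by exists i; rewrite inE it orbT.
  case=> i []; rewrite inE => /orP[/eqP->|it] si Fi; first by left.
  by right; apply/IH; exists i.
split; first by move=> /IH [i [it si Fi]]; exists i; rewrite inE it orbT.
case=> i []; rewrite inE => /orP[/eqP->|it] si Fi; first by rewrite si in sh.
by apply/IH; exists i.
Qed.

Section OneProc.
Variables (d : measure_display) (T : measurableType d) (P : probability T R)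
  (X : nat -> T -> jointA A) (law : nat -> jointA A -> R).
Hypothesis hl : has_law P X law.
Local Notation pth w := (fun k => X k w).

Lemma measure_bigU (I : eqType) (s : seq I) (sel : pred I) (F : I -> set T) :
  uniq s -> (forall i, measurable (F i)) -> (forall i j, i != j -> F i `&` F j = set0) ->
  P (\big[setU/set0]_(i <- s | sel i) F i) = (\sum_(i <- s | sel i) P (F i))%E.
Proof.
move=> + mF dF; elim: s => [|h t IH]; first by rewrite !big_nil measure0.
move=> /= /andP[ht ut]; rewrite !big_cons; case: ifP => _; last exact: IH ut.
have mU : measurable (\big[setU/set0]_(i <- t | sel i) F i).
  by apply: bigsetU_measurable => i _; apply: mF.
have dU : F h `&` (\big[setU/set0]_(i <- t | sel i) F i) = set0.
  apply/seteqP; split => // w [Fh /bigU_mem [i [it _ Fi]]].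
  have hi : h != i by apply: contraNneq ht => ->.
  by rewrite -(dF _ _ hi); split.
rewrite measureU //; congr (_ + _)%E; exact: IH ut.
Qed.

Definition cyl (s : seq (jointA A)) : set T :=
  [set w | forall i, (i < size s)%N -> X i.+1 w = nth a0 s i].

Lemma cylf_meas (s : seq (jointA A)) o :
  measurable [set w | forall i, (i < size s)%N -> X (i + o).+1 w = nth a0 s i].
Proof.
elim: s o => [|a s IH] o.
  by rewrite (_ : [set w | _] = setT) //; apply/seteqP; split.
rewrite (_ : [set w | _] = [set w | X o.+1 w = a] `&`
   [set w | forall i, (i < size s)%N -> X (i + o.+1).+1 w = nth a0 s i]).
  by apply: measurableI => //; apply: hl.1.
apply/seteqP; split => w /=.
  move=> h; split; first exact: (h 0%N).
  by move=> i ilt; have := h i.+1 ilt; rewrite /= addSnnS.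
by case=> h0 h [|i] ilt //=; rewrite -h // addSnnS.
Qed.

Lemma cyl_meas s : measurable (cyl s).
Proof.
rewrite (_ : cyl s = [set w | forall i, (i < size s)%N -> X (i + 0).+1 w = nth a0 s i]).
  exact: cylf_meas.
apply/seteqP; split => w /= h i hi; have := h i hi; by rewrite addn0.
Qed.

Lemma cyl_prob s : P (cyl s) = (\prod_(i < size s) law i.+1 (nth a0 s i))%:E.
Proof.
have := hl.2 (size s) (ext s).
rewrite (_ : [set w | _] = cyl s).
  by move=> ->; rewrite big_add1 /= big_mkord.
apply/seteqP; split => w /= h i hi.
  by rewrite (h i.+1) //; lia.
rewrite /ext; have -> : i = i.-1.+1 by lia.
rewrite h //; by case: i hi => [//|i] /andP[].
Qed.

Lemma cyl_disj s s' : size s = size s' -> s != s' -> cyl s `&` cyl s' = set0.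
Proof.
move=> ss ne; apply/seteqP; split => // w [h h'].
move/negP: ne; apply; apply/eqP; apply: (eq_from_nth (x0 := a0)) => // i hi.
by rewrite -h // -h' // -ss.
Qed.

Definition tupS (K N : nat) w : N.-tuple (jointA A) :=
  Tuple (introT eqP (size_mkseq (fun i => X (i + K).+1 w) N)).

Lemma ev_rep N (C : path -> Prop) : dep N C ->
  [set w | C (pth w)] = \big[setU/set0]_(v : N.-tuple (jointA A) | `[< C (ext v) >]) cyl v.
Proof.
move=> dC; apply/seteqP; split => w /=.
  move=> Cw; apply/bigU_mem; exists (tupS 0 N w); split.
  - exact: mem_index_enum.
  - apply/asboolP; apply: dC Cw => i hi /=.
    by rewrite /ext nth_mkseq; [congr X; lia|lia].
  - by move=> i /=; rewrite size_mkseq => hi; rewrite nth_mkseq // addn0.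
case/bigU_mem => v [_ /asboolP Cv cv]; apply: dC Cv => i hi.
rewrite /ext; have -> : i = i.-1.+1 by lia.
rewrite cv // size_tuple; by case: i hi => [//|i] /andP[].
Qed.

Lemma ev_meas N (C : path -> Prop) : dep N C -> measurable [set w | C (pth w)].
Proof.
by move=> dC; rewrite (ev_rep dC); apply: bigsetU_measurable => v _; apply: cyl_meas.
Qed.

Lemma ev_prob N (C : path -> Prop) : dep N C -> P [set w | C (pth w)] =
  (\sum_(v : N.-tuple (jointA A) | `[< C (ext v) >]) \prod_(i < N) law i.+1 (nth a0 v i))%:E.
Proof.
move=> dC; rewrite (ev_rep dC) measure_bigU.
- rewrite -sumEFin; apply: eq_bigr => v _; rewrite cyl_prob.
  by case: v => s /= /eqP hs; subst N.
- exact: (@index_enum_uniq (N.-tuple (jointA A))).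
- by move=> v; apply: cyl_meas.
- move=> v v' ne; apply: cyl_disj; last exact: ne.
  by case: v v' {ne} => s hs [s' hs'] /=; rewrite (eqP hs) (eqP hs').
Qed.

End OneProc.
End Prob.
Section TwoProc.
Variables (R : realType) (J : nat) (A : 'I_J -> finType).
Local Notation path := (nat -> jointA A).
Variable a0 : jointA A.
Variables (d : measure_display) (T : measurableType d) (P : probability T R)
  (X : nat -> T -> jointA A) (law : nat -> jointA A -> R).
Hypothesis hl : has_law P X law.
Variables (d' : measure_display) (T' : measurableType d') (P' : probability T' R)
  (X' : nat -> T' -> jointA A) (law' : nat -> jointA A -> R).
Hypothesis hl' : has_law P' X' law'.
Variable K : nat.
Hypothesis hK : forall i, law (i + K).+1 = law' i.+1.

Lemma cyl_prob' s n : size s = n ->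
  P (cyl a0 X s) = (\prod_(i < n) law i.+1 (nth a0 s i))%:E.
Proof. by move=> <-; apply: (cyl_prob a0 hl). Qed.

Lemma ev2_rep N (B C : path -> Prop) : dep K B -> dep N C ->
  [set w | B (fun k => X k w) /\ C (shift K (fun k => X k w))] =
  \big[setU/set0]_(p : K.-tuple (jointA A) * N.-tuple (jointA A) |
     `[< B (ext a0 p.1) >] && `[< C (ext a0 p.2) >]) cyl a0 X (val p.1 ++ val p.2).
Proof.
move=> dB dC; apply/seteqP; split => w /=.
  case=> Bw Cw; apply/bigU_mem; exists (tupS X 0 K w, tupS X K N w); split.
  - exact: mem_index_enum.
  - apply/andP; split; apply/asboolP.
      apply: dB Bw => i hi /=.
      by rewrite /ext nth_mkseq; [congr X; lia|by case: i hi => [//|i] /andP[]].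
    apply: dC Cw => i hi /=.
    by rewrite /ext /shift nth_mkseq; [congr X; lia|by case: i hi => [//|i] /andP[]].
  - move=> i /=; rewrite size_cat !size_mkseq => hi; rewrite nth_cat size_mkseq.
    case: ifP => ik; first by rewrite nth_mkseq // addn0.
    rewrite nth_mkseq; last lia.
    congr X; lia.
case/bigU_mem => -[a b] [_ /andP[/asboolP Ba /asboolP Cb] cv] /=.
have hs : size (val a ++ val b) = (K + N)%N by rewrite size_cat !size_tuple.
split.
  apply: dB Ba => i hi; rewrite /ext.
  have -> : i = i.-1.+1 by lia.
  rewrite cv /=; last by rewrite hs; case: i hi => [//|i] /andP[_]; lia.
  by rewrite nth_cat size_tuple; case: i hi => [//|i] /andP[_ ->].
apply: dC Cb => i hi; rewrite /ext /shift.
have -> : (i + K)%N = (i.-1 + K).+1 by case: i hi => [//|i]; lia.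
rewrite cv /=; last by rewrite hs; case: i hi => [//|i] /andP[_]; lia.
rewrite nth_cat size_tuple; case: ifP => h; first lia.
by congr nth; lia.
Qed.

Lemma markov N (B C : path -> Prop) : dep K B -> dep N C ->
  P [set w | B (fun k => X k w) /\ C (shift K (fun k => X k w))] =
  (P [set w | B (fun k => X k w)] * P' [set w | C (fun k => X' k w)])%E.
Proof.
move=> dB dC; rewrite (ev_prob a0 hl dB) (ev_prob a0 hl' dC) -EFinM.
rewrite (ev2_rep dB dC) (measure_bigU P); first last.
- move=> p p' ne; apply: cyl_disj.
    by rewrite !size_cat; case: p p' {ne} => -[s hs] [t ht] [[s' hs'] [t' ht']] /=;
      rewrite (eqP hs) (eqP hs') (eqP ht) (eqP ht').
  apply: contraNneq ne => e; move: e; case: p p' => -[s hs] [t ht] [[s' hs'] [t' ht']] /= e.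
  have : s ++ t == s' ++ t' by rewrite e.
  rewrite eqseq_cat; last by rewrite (eqP hs) (eqP hs').
  case/andP => /eqP e1 /eqP e2; subst s' t'.
  by rewrite (bool_irrelevance hs hs') (bool_irrelevance ht ht').
- by move=> p; apply: (cyl_meas a0 hl).
- exact: index_enum_uniq.
rewrite big_distrlr /= pair_big_dep /= -sumEFin; apply: eq_bigr => -[a b] _ /=.
rewrite (@cyl_prob' _ (K + N)%N); last by rewrite size_cat !size_tuple.
congr EFin; rewrite big_split_ord /=; congr (_ * _).
  apply: eq_bigr => i _; rewrite nth_cat size_tuple /=.
  by rewrite ltn_ord.
apply: eq_bigr => i _; rewrite nth_cat size_tuple /=.
have -> : (K + i < K)%N = false by lia.
rewrite addnC -hK; congr (law _ (nth _ _ _)); lia.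
Qed.

End TwoProc.
Section SeriesInt.
Variable R : realType.
Lemma indE T (A : set T) w : ((\1_A w : R)%:E) = ind R (A w).
Proof. rewrite /ind indicE. by case: asboolP => h; [rewrite mem_set|rewrite memNset]. Qed.

Lemma meas_ind d (T : measurableType d) (D : set T) (A : set T) :
  measurable A -> measurable_fun D (fun w => ind R (A w)).
Proof.
move=> mA; rewrite (_ : (fun w => ind R (A w)) = (fun w => (\1_A w : R)%:E)).
  by apply/measurable_EFinP; exact: measurable_indic.
by apply/funext => w; rewrite indE.
Qed.

Lemma series_integral d (T : measurableType d) (mu : {measure set T -> \bar R}) (D : set T)
  (mD : measurable D) (F : nat -> set T) (g : T -> \bar R) :
  (forall n, measurable (F n)) -> (forall w, g w = (\sum_(n <oo) ind R (F n w))%E) ->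
  [/\ measurable_fun D g, (forall w, 0 <= g w)%E &
     (\int[mu]_(w in D) g w = \sum_(n <oo) mu (F n `&` D))%E].
Proof.
move=> mF hg.
have -> : g = (fun w => \sum_(n <oo) ind R (F n w))%E by apply/funext.
split.
- by apply: (@ge0_emeasurable_sum _ _ _ D (fun n w => ind R (F n w)) predT) => // *;
    [apply: ind_ge0|apply: meas_ind].
- by move=> w; apply: nneseries_ge0 => *; apply: ind_ge0.
rewrite integral_nneseries //.
- by apply: eq_eseriesr => n _; rewrite -integral_indic //.
- by move=> n; apply: meas_ind.
- by move=> *; apply: ind_ge0.
Qed.

Lemma series_integral2 d (T : measurableType d) (mu : {measure set T -> \bar R}) (D : set T)
  (mD : measurable D) (F : nat -> nat -> set T) (g : T -> \bar R) :
  (forall k n, measurable (F k n)) ->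
  (forall w, g w = (\sum_(k <oo) \sum_(n <oo) ind R (F k n w))%E) ->
  [/\ measurable_fun D g, (forall w, 0 <= g w)%E &
     (\int[mu]_(w in D) g w = \sum_(k <oo) \sum_(n <oo) mu (F k n `&` D))%E].
Proof.
move=> mF hg.
have -> : g = (fun w => \sum_(k <oo) \sum_(n <oo) ind R (F k n w))%E by apply/funext.
have inner k := @series_integral d T mu D mD (F k) (fun w => \sum_(n <oo) ind R (F k n w))%E
   (mF k) (fun w => erefl).
split.
- apply: (@ge0_emeasurable_sum _ _ _ D (fun k w => \sum_(n <oo) ind R (F k n w))%E predT) => k *.
    by have [_ h _] := inner k; apply: h.
  by have [h _ _] := inner k; apply: h.
- by move=> w; apply: nneseries_ge0 => k *; have [_ h _] := inner k; apply: h.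
rewrite integral_nneseries //.
- by apply: eq_eseriesr => k _; have [_ _ h] := inner k; apply: h.
- by move=> k; have [h _ _] := inner k; apply: h.
- by move=> k w _; have [_ h _] := inner k; apply: h.
Qed.
End SeriesInt.
Section Main.
Variables (R : realType) (J : nat) (A : 'I_J -> finType)
  (q : forall j : 'I_J, (A j -> R) -> R)
  (kappa cS : R) (cD : nat -> R) (fstar : nat -> jointA A -> R) (t1 : nat)
  (xpre : nat -> jointA A).
Hypothesis t10 : (0 < t1)%N.
Local Notation path := (nat -> jointA A).
Local Notation SS := (S_ q kappa cS cD fstar).
Local Notation DD := (D_ q kappa cS cD fstar).
Local Notation NN := (n_ q kappa cS cD fstar).
Local Notation TS := (t_S q kappa cS cD fstar).
Local Notation TI := (t_I q kappa cS cD fstar).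
Local Notation RK := (Rk q kappa cS cD fstar t1).
Local Notation CR := (cross q kappa cS cD fstar).
Local Notation STI := (stopI q kappa cS cD fstar).

Definition Epred (x : path) := forall i, (0 < i < t1)%N -> x i = xpre i.

Lemma agree_mono (x y : path) n k : agree x y n -> (k <= n)%N -> agree x y k.
Proof. by move=> ag kn i hi; apply: ag; lia. Qed.

Lemma dep_mono N N' (C : path -> Prop) : dep N C -> (N <= N')%N -> dep N' C.
Proof. by move=> dC NN' x y ag; apply: dC; apply: agree_mono ag NN'. Qed.

Lemma dep_and N (B C : path -> Prop) : dep N B -> dep N C -> dep N (fun x => B x /\ C x).
Proof. by move=> dB dC x y ag [Bx Cx]; split; [apply: dB ag Bx|apply: dC ag Cx]. Qed.

Lemma dep_shift N K (C : path -> Prop) : dep N C -> dep (N + K) (fun x => C (shift K x)).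
Proof. by move=> dC x y ag; apply: dC => i hi; rewrite /shift; apply: ag; lia. Qed.

Lemma dep_E : dep t1.-1 Epred.
Proof. by move=> x y ag Ex i hi; rewrite -(ag i) ?Ex //; lia. Qed.

Lemma cross_loc (x y : path) k : agree x y k -> CR x k -> CR y k.
Proof.
move=> ag [k0 c]; split => //.
by have [<- _] := stat_loc q kappa cS cD fstar ag.
Qed.

Lemma dep_TS n : dep n (fun y => ((n%:R : R)%:E < TS y)%E).
Proof.
move=> x y ag; rewrite !TS_def => /inf_nat_gt h; apply/inf_nat_gt => k cy.
case: (leqP k n) => kn //; exfalso.
have ag' : agree y x k by move=> i hi; rewrite (agree_mono ag kn).
have := h k (cross_loc ag' cy); lia.
Qed.

Lemma dep_TI n : dep n (fun y => ((n%:R : R)%:E < TI y)%E).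
Proof.
move=> x y ag; rewrite !TI_def => /inf_nat_gt h; apply/inf_nat_gt => k [k0 cy dy].
case: (leqP k n) => kn //; exfalso.
have ag' : agree y x k by move=> i hi; rewrite (agree_mono ag kn).
have [e1 [e2 e3]] := stat_loc q kappa cS cD fstar ag'.
have := h k; rewrite /stopI -e1 -e2 -e3 => /(_ (And3 k0 cy dy)); lia.
Qed.

Lemma dep_Rk k : dep k (fun x => RK x k).
Proof.
move=> x y ag [h1 cx nc dl]; split => //.
- exact: cross_loc ag cx.
- move=> i hi cy; apply: (nc i hi); apply: (cross_loc _ cy).
  by move=> j hj; rewrite (agree_mono ag (_ : i <= k)%N) //; lia.
- by have [_ [<- <-]] := stat_loc q kappa cS cD fstar ag.
Qed.

Lemma Rk_uniq x i j : RK x i -> RK x j -> i = j.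
Proof.
move=> [h1 ci nci _] [h2 cj ncj _].
case: (ltngtP i j) => // ij; exfalso.
  by apply: (ncj i) => //; lia.
by apply: (nci j) => //; lia.
Qed.

Lemma TS_series y : TS y = (\sum_(n <oo) ind R ((n%:R : R)%:E < TS y))%E.
Proof. by rewrite series_lt //; apply: inf_nat_val. Qed.

Lemma TI_series y : TI y = (\sum_(n <oo) ind R ((n%:R : R)%:E < TI y))%E.
Proof. by rewrite series_lt //; apply: inf_nat_val. Qed.

Lemma D_series x : maxe (TI x - ((t1%:R : R))%:E + 1)%E 0%E =
  (\sum_(n <oo) ind R ((((n + t1.-1)%N)%:R : R)%:E < TI x))%E.
Proof.
have ht : t1 = t1.-1.+1 by lia.
rewrite TI_def; case: (@inf_nat_val R (STI x)) => [->|[k ->]].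
  transitivity (\sum_(n <oo) ((1 : R)%:E))%E; last first.
    by apply: eq_eseriesr => n _; rewrite /ind asboolT // ltry.
  by rewrite series_ones /= maxye.
transitivity (\sum_(n <oo) ind R (n < k - t1.-1)%N)%E; last first.
  apply: eq_eseriesr => n _; rewrite /ind lte_fin ltr_nat !asboolb.
  have -> : (n + t1.-1 < k)%N = (n < k - t1.-1)%N.
    by apply/idP/idP => h; lia.
  by [].
rewrite series_nat -EFinB -EFinD -EFin_max; congr EFin.
rewrite {1}ht -addn1 natrD.
case: (leqP t1.-1 k) => hk.
  rewrite natrB // max_l; first by rewrite opprD addrA subrK.
  have : (t1.-1%:R <= k%:R :> R) by rewrite ler_nat.
  lra.
have -> : (k - t1.-1 = 0)%N by lia.
rewrite max_r //.
have : (k.+1%:R <= t1.-1%:R :> R) by rewrite ler_nat.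
rewrite -addn1 natrD; lra.
Qed.

Lemma pw_bound x : (maxe (TI x - ((t1%:R : R))%:E + 1)%E 0%E <=
  \sum_(n <oo) ind R ((n%:R : R)%:E < TS (shift t1.-1 x)) +
  \sum_(k <oo) \sum_(n <oo) ind R (RK x k /\ (n%:R : R)%:E < TI (shift k x)))%E.
Proof.
have hS0 : (0 <= \sum_(k <oo) \sum_(n <oo) ind R (RK x k /\ (n%:R : R)%:E < TI (shift k x)))%E.
  apply: nneseries_ge0 => k _ _; apply: nneseries_ge0 => n _ _; apply: ind_ge0.
case: (pathwise q kappa cS cD fstar x t10) => [h|[M [hR h]]].
  by apply: le_trans h _; rewrite -TS_series; apply: leeDl.
apply: le_trans h _; rewrite -TS_series; apply: leeD2l.
rewrite TI_series.
have -> : (\sum_(n <oo) ind R ((n%:R : R)%:E < TI (shift M x)) =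
   \sum_(n <oo) ind R (RK x M /\ (n%:R : R)%:E < TI (shift M x)))%E.
  apply: eq_eseriesr => n _; rewrite /ind.
  case: asboolP => h1; case: asboolP => h2 //.
    by exfalso; apply: h2.
  by exfalso; apply: h1; case: h2.
apply: le_trans (nneseries_lim_ge M.+1 _) => /=; last first.
  by move=> k _ _; apply: nneseries_ge0 => n _ _; apply: ind_ge0.
rewrite big_nat_recr //=; apply: leeDr.
by apply: sume_ge0 => k _; apply: nneseries_ge0 => n _ _; apply: ind_ge0.
Qed.

Variables (f0 f1 : forall j : 'I_J, A j -> R) (Jset : {set 'I_J})
  (d : measure_display) (T : measurableType d) (P : probability T R)
  (X : nat -> T -> jointA A)
  (d' : measure_display) (T' : measurableType d') (P' : probability T' R)
  (X' : nat -> T' -> jointA A).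
Hypothesis hl : has_law P X (change_law f0 f1 Jset t1).
Hypothesis hl' : has_law P' X' (change_law f0 f1 Jset 1).
Hypothesis hE : (0 < P (prefix_event X t1 xpre))%E.

Lemma law_shift K : (t1.-1 <= K)%N ->
  forall i, change_law f0 f1 Jset t1 (i + K).+1 = change_law f0 f1 Jset 1 i.+1.
Proof.
move=> hK i; rewrite /change_law.
by have -> : ((i + K).+1 < t1)%N = false by lia.
Qed.

Lemma main_ineq :
  ((\int[P]_(w in prefix_event X t1 xpre)
      maxe (TI (sample_path X w) - (t1%:R)%:E + 1%E) 0%E)
     * ((fine (P (prefix_event X t1 xpre)))^-1)%:E
   <= \int[P']_w (TS (sample_path X' w) + TI (sample_path X' w)))%E.
Proof.
rewrite /sample_path.
set E := prefix_event X t1 xpre.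
have [w0 _] : E !=set0.
  apply/set0P; apply/negP => /eqP E0; move: hE; rewrite -/E E0 measure0 ltxx.
  by [].
pose a0 := X 0%N w0.
have mE : measurable E := ev_meas a0 hl dep_E.
pose AS n := [set w | ((n%:R : R)%:E < TS (shift t1.-1 (fun k => X k w)))%E].
pose AR k n := [set w | RK (fun k => X k w) k /\ ((n%:R : R)%:E < TI (shift k (fun k => X k w)))%E].
pose AD n := [set w | ((((n + t1.-1)%N)%:R : R)%:E < TI (fun k => X k w))%E].
pose BS n := [set w | ((n%:R : R)%:E < TS (fun k => X' k w))%E].
pose BI n := [set w | ((n%:R : R)%:E < TI (fun k => X' k w))%E].
pose Bk k := [set w | Epred (fun k => X k w) /\ RK (fun k => X k w) k].
have mAS n : measurable (AS n) := ev_meas a0 hl (dep_shift (K := t1.-1) (dep_TS (n:=n))).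
have mAR k n : measurable (AR k n).
  exact: (ev_meas a0 hl (dep_and (dep_mono (dep_Rk (k:=k)) (leq_addl n k)) (dep_shift (K := k) (dep_TI (n:=n))))).
have mAD n : measurable (AD n) := ev_meas a0 hl (dep_TI (n:=(n + t1.-1)%N)).
have mBS n : measurable (BS n) := ev_meas a0 hl' (dep_TS (n:=n)).
have mBI n : measurable (BI n) := ev_meas a0 hl' (dep_TI (n:=n)).
have [mTS TS0 ha] := @series_integral R _ _ P' setT measurableT BS
  (fun w => TS (fun k => X' k w)) mBS (fun w => TS_series _).
have [mTI TI0 hb] := @series_integral R _ _ P' setT measurableT BI
  (fun w => TI (fun k => X' k w)) mBI (fun w => TI_series _).
rewrite (ge0_integralD P' measurableT (fun w _ => TS0 w) mTS (fun w _ => TI0 w) mTI).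
rewrite ha hb.
set a := (\sum_(n <oo) P' (BS n `&` setT))%E.
set b := (\sum_(n <oo) P' (BI n `&` setT))%E.
have a0' : (0 <= a)%E by apply: nneseries_ge0.
have b0' : (0 <= b)%E by apply: nneseries_ge0.
have bNy : b != -oo%E by rewrite gt_eqF // (lt_le_trans (ltNyr 0%R) b0').
have aNy : a != -oo%E by rewrite gt_eqF // (lt_le_trans (ltNyr 0%R) a0').
have [[ra Ha]|Ha] : (exists ra, a = ra%:E) \/ a = +oo%E.
  by move: a0'; case: (a) => [r| |] //; [left; exists r|right].
  2: by rewrite Ha addye ?leey.
have [[rb Hb]|Hb] : (exists rb, b = rb%:E) \/ b = +oo%E.
  by move: b0'; case: (b) => [r| |] //; [left; exists r|right].
  2: by rewrite Hb addey ?leey.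
have rb0 : (0 <= rb)%R by rewrite -lee_fin -Hb.
have finE : P E \is a fin_num by apply: fin_num_measure.
set pE := fine (P E).
have hpE : P E = pE%:E by rewrite fineK.
have pE0 : (0 < pE)%R by rewrite -lte_fin -hpE.
rewrite lee_pdivrMr //.
have [mD D0 hD] := @series_integral R _ _ P E mE AD
  (fun w => maxe (TI (fun k => X k w) - (t1%:R)%:E + 1) 0)%E mAD (fun w => D_series _).
have [mS1 S10 h1] := @series_integral R _ _ P E mE AS
  (fun w => \sum_(n <oo) ind R (AS n w))%E mAS (fun w => erefl).
have [mS2 S20 h2] := @series_integral2 R _ _ P E mE AR
  (fun w => \sum_(k <oo) \sum_(n <oo) ind R (AR k n w))%E mAR (fun w => erefl).
apply: (@le_trans _ _ (\int[P]_(w in E) ((\sum_(n <oo) ind R (AS n w)) +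
     (\sum_(k <oo) \sum_(n <oo) ind R (AR k n w))))%E).
  apply: (ge0_le_integral P mE (fun w _ => D0 w) mD (emeasurable_funD mS1 mS2)).
  by move=> w _; apply: pw_bound.
rewrite (ge0_integralD P mE (fun w _ => S10 w) mS1 (fun w _ => S20 w) mS2).
rewrite h1 h2.
have e1 : (\sum_(n <oo) P (AS n `&` E) = pE%:E * a)%E.
  rewrite /a -nneseriesZl; last by move=> n _; apply: measure_ge0.
  apply: eq_eseriesr => n _; rewrite setIT -hpE.
  transitivity (P [set w | Epred (fun k => X k w) /\
     ((n%:R : R)%:E < TS (shift t1.-1 (fun k => X k w)))%E]).
    by congr (P _); apply/seteqP; split => w [h h']; split.
  exact: (markov a0 hl hl' (law_shift (leqnn _)) dep_E (dep_TS (n:=n))).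
have e2 : forall k, (\sum_(n <oo) P (AR k n `&` E) = P (Bk k) * b)%E.
  move=> k; case: (leqP t1 k) => tk.
    have tk' : (t1.-1 <= k)%N by lia.
    have finB : P (Bk k) \is a fin_num.
      apply: fin_num_measure.
      exact: (ev_meas a0 hl (dep_and (dep_mono dep_E tk') (dep_Rk (k:=k)))).
    rewrite -(fineK finB) /b -nneseriesZl; last by move=> n _; apply: measure_ge0.
    apply: eq_eseriesr => n _; rewrite setIT (fineK finB).
    transitivity (P [set w | (Epred (fun k => X k w) /\ RK (fun k => X k w) k) /\
       ((n%:R : R)%:E < TI (shift k (fun k => X k w)))%E]).
      by congr (P _); apply/seteqP; split => w; [case=> -[h h'] h''|case=> -[h h'] h''].
    exact: (markov a0 hl hl' (law_shift tk')
       (dep_and (dep_mono dep_E tk') (dep_Rk (k:=k))) (dep_TI (n:=n))).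
  have -> : Bk k = set0.
    by apply/seteqP; split => // w [_ [h _ _ _]]; lia.
  rewrite measure0 mul0e eseries0 // => n _ _.
  have -> : AR k n `&` E = set0.
    by apply/seteqP; split => // w [[[h _ _ _] _] _]; lia.
  by rewrite measure0.
have -> : (\sum_(k <oo) \sum_(n <oo) P (AR k n `&` E) = \sum_(k <oo) (P (Bk k) * b))%E.
  by apply: eq_eseriesr => k _; exact: e2.
have mBk k : measurable (Bk k).
  have [tk|tk] := leqP t1 k.
    have tk' : (t1.-1 <= k)%N by lia.
    exact: (ev_meas a0 hl (dep_and (dep_mono dep_E tk') (dep_Rk (k:=k)))).
  rewrite (_ : Bk k = set0) //.
  by apply/seteqP; split => // w [_ [h _ _ _]]; lia.
have sB : (\sum_(k <oo) P (Bk k) <= P E)%E.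
  have tB : trivIset setT Bk.
    by move=> i j _ _ [w [[_ ri] [_ rj]]]; exact: Rk_uniq ri rj.
  have := measure_bigcup P setT Bk (fun i _ => mBk i) tB.
  rewrite (eq_eseriesl _ _ (_ : (fun i => i \in setT) =1 predT)); last first.
    by move=> i; rewrite in_setT.
  move=> <-; apply: le_measure.
  - by rewrite inE; apply: bigcupT_measurable.
  - by rewrite inE.
  - by move=> w [k _ []].
rewrite e1 Ha Hb.
have -> : (\sum_(k <oo) (P (Bk k) * rb%:E) = \sum_(k <oo) (rb%:E * P (Bk k)))%E.
  by apply: eq_eseriesr => k _; rewrite muleC.
rewrite nneseriesZl; last by move=> k _; apply: measure_ge0.
apply: (@le_trans _ _ (pE%:E * ra%:E + rb%:E * pE%:E)%E).
  apply: leeD2l; apply: lee_wpmul2l; first by rewrite lee_fin.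
  by rewrite -hpE.
rewrite -!EFinM -!EFinD lee_fin.
by have -> : ((ra + rb) * pE = pE * ra + rb * pE)%R by ring.
Qed.

End Main.

Theorem lemma2 (R : realType) (J : nat) (A : 'I_J -> finType)
  (f0 f1 : forall j : 'I_J, A j -> R) (q : forall j : 'I_J, (A j -> R) -> R)
  (L qlow : 'I_J -> R) (kappa cS : R) (cD : nat -> R)
  (fstar : nat -> jointA A -> R) (Jset : {set 'I_J}) (t1 : nat)
  (d : measure_display) (T : measurableType d) (P : probability T R)
  (X : nat -> T -> jointA A)
  (d' : measure_display) (T' : measurableType d') (P' : probability T' R)
  (X' : nat -> T' -> jointA A)
  (xpre : nat -> jointA A) :
  (forall j, is_pmf (f0 j)) ->
  (forall j, is_pmf (f1 j)) ->
  (forall j, concave_on_simplex (q j)) ->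
  (forall j, lipschitz_l1 (L j) (q j)) ->
  (forall j, q j (f0 j) = 0) ->
  (forall j, 0 < qlow j) ->
  (forall j, j \in Jset -> qlow j <= q j (f1 j)) ->
  Jset != finset.set0 ->
  0 < kappa -> (forall j, kappa < qlow j) ->
  0 < cS -> (forall n, 0 <= cD n) ->
  is_fstar q f0 kappa cS fstar ->
  (0 < t1)%N ->
  has_law P X (change_law f0 f1 Jset t1) ->
  has_law P' X' (change_law f0 f1 Jset 1) ->
  (0 < P (prefix_event X t1 xpre))%E ->
  ((\int[P]_(w in prefix_event X t1 xpre)
      maxe (t_I q kappa cS cD fstar (sample_path X w) - (t1%:R)%:E + 1%E) 0%E)
     * ((fine (P (prefix_event X t1 xpre)))^-1)%:E
   <= \int[P']_w (t_S q kappa cS cD fstar (sample_path X' w)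
                  + t_I q kappa cS cD fstar (sample_path X' w)))%E.
Proof.
move=> _ _ _ _ _ _ _ _ _ _ _ _ _ t10 hl hl' hE.
exact: (main_ineq q kappa cS cD fstar t10 hl hl' hE).
Qed.
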